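(* Let $V$ be a finite set with $|V|=K$, let $\eta>0$, and let $\ell_1,\dots,\ell_T:V\to[0,\infty)$ be loss functions (so $\ell_t(i)\ge 0$ for all $t,i$). Let $q_1,\dots,q_T$ be the probability vectors $$q_t(i)=\frac{\exp(-\eta\sum_{s=1}^{t-1}\ell_s(i))}{\sum_{j\in V}\exp(-\eta\sum_{s=1}^{t-1}\ell_s(j))},\qquad i\in V.$$ For each $t$ let $S_t\subseteq V$ be such that $\ell_t(i)\le 1/\eta$ for all $i\in S_t$. Then for any $i^\star\in V$, $$\sum_{t=1}^T\sum_{i\in V}q_t(i)\ell_t(i)-\sum_{t=1}^T\ell_t(i^\star)\le\frac{\ln K}{\eta}+\eta\sum_{t=1}^T\Big(\sum_{i\in S_t}q_t(i)(1-q_t(i))\ell_t(i)^2+\sum_{i\notin S_t}q_t(i)\ell_t(i)^2\Big).$$ *)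

(* Defs.v *)
From mathcomp Require Import all_boot all_order all_algebra.
From mathcomp Require Import all_classical all_reals all_analysis.
Set Implicit Arguments. Unset Strict Implicit. Unset Printing Implicit Defensive.
Import Order.TTheory GRing.Theory Num.Theory.
Local Open Scope ring_scope.

Definition cumloss {R : realType} {V : finType} (l : nat -> V -> R) (t : nat) (i : V) : R :=
  \sum_(1 <= s < t) l s i.

Definition hedge_weights {R : realType} {V : finType} (eta : R) (l : nat -> V -> R)
  (t : nat) (i : V) : R :=
  expR (- eta * cumloss l t i) / \sum_(j : V) expR (- eta * cumloss l t j).

(* Main.v *)
Require Import Defs.
From mathcomp Require Import all_boot all_order all_algebra.
From mathcomp Require Import all_classical all_reals all_analysis.
From mathcomp Require Import ring lra.
Import Order.TTheory GRing.Theory Num.Theory.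
Local Open Scope ring_scope.

Lemma poly8 {R : realType} (u : R) : 0 <= u -> u <= 1/8 ->
  1 <= (1 + 8*u + 64*u^+2) * (1-u)^+8.
Proof. move=> h1 h2. nra. Qed.

Lemma expR_le_inv {R : realType} (u : R) : u < 1 -> expR u <= (1 - u)^-1.
Proof.
move=> hu.
have h := expR_ge1Dx (- u).
rewrite expRN in h.
rewrite -[expR u]invrK lef_pV2 ?posrE ?invr_gt0 ?expR_gt0 ?subr_gt0 //.
Qed.

Lemma expR_quad {R : realType} (y : R) : y <= 1 -> expR y <= 1 + y + y ^+ 2.
Proof.
move=> hy.
have [hy0|hy0] := leP y 0.
  have h1 : y < 1 by apply: (le_lt_trans hy0); lra.
  apply: le_trans; first exact: (@expR_le_inv _ y h1).
  have hp : 0 < 1 - y by lra.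
  rewrite -(@ler_pM2r _ (1 - y)) // mulVf ?gt_eqF //. nra.
set u := y / 8.
have hu0 : 0 <= u by rewrite /u; lra.
have hu1 : u <= 1/8 by rewrite /u; lra.
have -> : y = 8%:R * u by rewrite /u; field.
rewrite expRM_natl.
have hup : u < 1 by lra.
have hp : 0 < 1 - u by lra.
have hb : expR u ^+ 8 <= ((1 - u)^-1) ^+ 8.
  apply: (lerXn2r 8); rewrite ?nnegrE ?expR_ge0 ?invr_ge0 //; first exact: ltW.
  exact: (@expR_le_inv _ u hup).
apply: (le_trans hb).
rewrite exprVn.
have hp8 : 0 < (1 - u) ^+ 8 by rewrite exprn_gt0.
rewrite -(@ler_pM2r _ ((1 - u) ^+ 8)) // mulVf ?gt_eqF //.
have := @poly8 _ u hu0 hu1.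
have -> : (8 * u) ^+ 2 = 64 * u ^+ 2 :> R by ring.
by [].
Qed.
Lemma split_sum {R : realType} {V : finType} (S : {set V}) (f : V -> R) :
  \sum_i f i = \sum_(i in S) f i + \sum_(i in ~: S) f i.
Proof.
rewrite (bigID (fun i => i \in S)) /=; congr (_ + _).
by apply: eq_bigl => i; rewrite !inE.
Qed.

Lemma le_sum_in {R : realType} {V : finType} (S : {set V}) (f : V -> R) i :
  (forall j, 0 <= f j) -> i \in S -> f i <= \sum_(j in S) f j.
Proof.
move=> f0 iS; rewrite (bigD1 i) //= lerDl; apply: sumr_ge0 => j _; exact: f0.
Qed.

Lemma sq_sum_ge {R : realType} {V : finType} (S : {set V}) (f : V -> R) :
  (forall j, 0 <= f j) -> \sum_(i in S) f i ^+ 2 <= (\sum_(i in S) f i) ^+ 2.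
Proof.
move=> f0; rewrite expr2 mulr_suml; apply: ler_sum => i iS.
by rewrite expr2 ler_wpM2l // le_sum_in.
Qed.

Lemma step {R : realType} {V : finType} (q x : V -> R) (S : {set V}) :
  (forall i, 0 <= q i) -> \sum_i q i = 1 -> (forall i, 0 <= x i) ->
  (forall i, i \in S -> x i <= 1) ->
  ln (\sum_i q i * expR (- x i)) <= - \sum_i q i * x i +
     (\sum_(i in S) q i * (1 - q i) * x i ^+ 2 + \sum_(i in ~: S) q i * x i ^+ 2).
Proof.
move=> q0 q1 x0 xS.
set c := \sum_(i in S) q i * x i.
set A := \sum_i q i * x i.
set B := \sum_i q i * x i ^+ 2.
set BS := \sum_(i in S) q i * x i ^+ 2.
set BN := \sum_(i in ~: S) q i * x i ^+ 2.
set D := \sum_(i in S) (q i * x i) ^+ 2.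
set N := \sum_(i in ~: S) q i * x i.
have qx0 : forall i, 0 <= q i * x i by move=> i; rewrite mulr_ge0.
have c0 : 0 <= c by apply: sumr_ge0 => i _.
have N0 : 0 <= N by apply: sumr_ge0 => i _.
have c1 : c <= 1.
  rewrite -q1 (split_sum S q); apply: le_trans (_ : \sum_(i in S) q i <= _).
    apply: ler_sum => i iS; rewrite -[X in _ <= X]mulr1 ler_wpM2l //; exact: xS.
  by rewrite lerDl; apply: sumr_ge0 => i _.
have AE : A = c + N by rewrite /A (split_sum S).
have BE : B = BS + BN by rewrite /B (split_sum S).
have DE : \sum_(i in S) q i * (1 - q i) * x i ^+ 2 = BS - D.
  by rewrite /BS /D -sumrB; apply: eq_bigr => i _; ring.
have cD : D <= c ^+ 2 by apply: sq_sum_ge.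
set Z := \sum_i q i * expR (- x i).
have Zpos : 0 < Z.
  rewrite lt_neqAle sumr_ge0 ?andbT; last by move=> i _; rewrite mulr_ge0 ?expR_ge0.
  apply/eqP => /esym/eqP; rewrite psumr_eq0; last by move=> i _; rewrite mulr_ge0 ?expR_ge0.
  move/allP => H.
  have : \sum_i q i = 0.
    apply: big1 => i _; have := H i (mem_index_enum i); rewrite mulf_eq0 expR_eq0 orbF.
    by move/eqP.
  by rewrite q1 => /eqP; rewrite oner_eq0.
have ecZ : expR c * Z = \sum_i q i * expR (c - x i).
  rewrite /Z mulr_sumr; apply: eq_bigr => i _; rewrite expRD; ring.
have lnZ : ln Z = ln (expR c * Z) - c.
  by rewrite lnM ?posrE ?expR_gt0 // expRK; ring.
have lnle : ln (expR c * Z) <= expR c * Z - 1.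
  have h := @le_ln1Dx R (expR c * Z - 1).
  rewrite (_ : 1 + (expR c * Z - 1) = expR c * Z) in h; last by ring.
  apply: h.
  have : 0 < expR c * Z by rewrite mulr_gt0 ?expR_gt0.
  lra.
have bnd : \sum_i q i * expR (c - x i) <= \sum_i q i * (1 + (c - x i) + (c - x i) ^+ 2).
  apply: ler_sum => i _; rewrite ler_wpM2l //; apply: expR_quad.
  have := x0 i; lra.
have E : \sum_i q i * (1 + (c - x i) + (c - x i) ^+ 2) =
   \sum_i q i + c * \sum_i q i - A + c ^+ 2 * \sum_i q i - 2 * c * A + B.
  rewrite /A /B [c * _]mulr_sumr [c ^+ 2 * _]mulr_sumr [2 * c * _]mulr_sumr -big_split -sumrB -big_split -sumrB -big_split /=.
  by apply: eq_bigr => i _; ring.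
rewrite -/Z DE -/A.
rewrite E q1 in bnd; rewrite -ecZ in bnd.
have cN : 0 <= c * N by rewrite mulr_ge0.
rewrite lnZ; nra.
Qed.

Theorem lemma4 (R : realType) (V : finType) (T : nat) (eta : R)
  (l : nat -> V -> R) (S : nat -> {set V}) (istar : V) :
  0 < eta ->
  (forall t i, (1 <= t <= T)%N -> 0 <= l t i) ->
  (forall t i, (1 <= t <= T)%N -> i \in S t -> l t i <= eta^-1) ->
  \sum_(1 <= t < T.+1) \sum_(i : V) hedge_weights eta l t i * l t i
    - \sum_(1 <= t < T.+1) l t istar
  <= ln (#|V|%:R) / eta
     + eta * \sum_(1 <= t < T.+1)
          ( \sum_(i in S t) hedge_weights eta l t i * (1 - hedge_weights eta l t i) * (l t i) ^+ 2
          + \sum_(i in ~: S t) hedge_weights eta l t i * (l t i) ^+ 2 ).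
Proof.
move=> eta0 l0 lS.
pose W t := \sum_j expR (- eta * cumloss l t j).
have Wpos : forall t, 0 < W t.
  move=> t; rewrite /W (bigD1 istar) //=; apply: (lt_le_trans (expR_gt0 (- eta * cumloss l t istar))).
  by rewrite lerDl; apply: sumr_ge0 => j _; exact: expR_ge0.
have Wn0 : forall t, W t != 0 by move=> t; rewrite gt_eqF.
have cumS : forall t i, (1 <= t)%N -> cumloss l t.+1 i = cumloss l t i + l t i.
  by move=> t i ht; rewrite /cumloss big_nat_recr.
set Rt := fun t => \sum_(i in S t) hedge_weights eta l t i * (1 - hedge_weights eta l t i) * (l t i) ^+ 2
          + \sum_(i in ~: S t) hedge_weights eta l t i * (l t i) ^+ 2.
set Lt := fun t => \sum_(i : V) hedge_weights eta l t i * l t i.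
have stp : forall t, (1 <= t <= T)%N ->
    ln (W t.+1) - ln (W t) <= - eta * Lt t + eta ^+ 2 * Rt t.
  move=> t /andP [t1 tT].
  set q := hedge_weights eta l t.
  have WE : W t.+1 = W t * \sum_i q i * expR (- (eta * l t i)).
    rewrite mulr_sumr /W; apply: eq_bigr => i _.
    rewrite /q /hedge_weights cumS // -/(W t) mulrDr mulNr expRD.
    rewrite !mulNr; field; exact: Wn0.
  have q0 : forall i, 0 <= q i.
    by move=> i; rewrite /q /hedge_weights divr_ge0 ?expR_ge0 // ltW // Wpos.
  have q1 : \sum_i q i = 1.
    rewrite /q /hedge_weights -mulr_suml -/(W t); exact: mulfV.
  have Spos : 0 < \sum_i q i * expR (- (eta * l t i)).
    have := Wpos t.+1.
    by rewrite WE pmulr_rgt0.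
  rewrite WE lnM ?posrE // addrC addKr.
  have hx0 : forall i, 0 <= eta * l t i.
    by move=> i; apply: mulr_ge0; [exact: ltW | apply: l0; rewrite t1].
  have hx1 : forall i, i \in S t -> eta * l t i <= 1.
    move=> i iS; rewrite -(@mulfV _ eta (lt0r_neq0 eta0)).
    apply: ler_wpM2l; first exact: ltW.
    by apply: lS => //; rewrite t1.
  have H := @step R V q (fun i => eta * l t i) (S t) q0 q1 hx0 hx1.
  have e1 : \sum_i q i * (eta * l t i) = eta * Lt t.
    by rewrite /Lt mulr_sumr; apply: eq_bigr => i _; rewrite /q; ring.
  have e2 : \sum_(i in S t) q i * (1 - q i) * (eta * l t i) ^+ 2 = eta ^+ 2 *
     \sum_(i in S t) q i * (1 - q i) * (l t i) ^+ 2.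
    by rewrite mulr_sumr; apply: eq_bigr => i _; ring.
  have e3 : \sum_(i in ~: S t) q i * (eta * l t i) ^+ 2 = eta ^+ 2 *
     \sum_(i in ~: S t) q i * (l t i) ^+ 2.
    by rewrite mulr_sumr; apply: eq_bigr => i _; ring.
  rewrite /= e1 e2 e3 in H.
  apply: (le_trans H); rewrite /Rt mulrDr mulNr.
  done.
have tel : \sum_(1 <= t < T.+1) (ln (W t.+1) - ln (W t)) = ln (W T.+1) - ln (W 1).
  by rewrite telescope_sumr.
have sumle : \sum_(1 <= t < T.+1) (ln (W t.+1) - ln (W t)) <=
    \sum_(1 <= t < T.+1) (- eta * Lt t + eta ^+ 2 * Rt t).
  by apply: ler_sum_nat => t /andP [h1 h2]; apply: stp; rewrite h1 -ltnS.
have sumE : \sum_(1 <= t < T.+1) (- eta * Lt t + eta ^+ 2 * Rt t) =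
    - eta * \sum_(1 <= t < T.+1) Lt t + eta ^+ 2 * \sum_(1 <= t < T.+1) Rt t.
  by rewrite big_split /= -!mulr_sumr.
have W1 : W 1%N = #|V|%:R.
  rewrite /W; under eq_bigr do rewrite /cumloss big_geq // mulr0 expR0.
  by rewrite sumr_const.
have WT : - eta * \sum_(1 <= t < T.+1) l t istar <= ln (W T.+1).
  rewrite -[X in X <= _]expRK ler_ln ?posrE ?expR_gt0 //.
  rewrite /W (bigD1 istar) //= lerDl; apply: sumr_ge0 => j _; exact: expR_ge0.
rewrite tel sumE W1 in sumle.
change (\sum_(1 <= t < T.+1) Lt t - \sum_(1 <= t < T.+1) l t istar <=
  ln (#|V|%:R : R) / eta + eta * \sum_(1 <= t < T.+1) Rt t).
move: sumle WT.
set X := \sum_(1 <= t < T.+1) Lt t.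
set Y := \sum_(1 <= t < T.+1) l t istar.
set Rs := \sum_(1 <= t < T.+1) Rt t.
set K := ln (#|V|%:R : R).
set LW := ln (W T.+1).
move=> h1 h2.
rewrite -(ler_pM2l eta0).
have hK : eta * (K / eta) = K by field; exact: lt0r_neq0.
move: hK; set KE := K / eta => hK.
nra.
Qed.
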